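(* Let $G=(V,E)$ be a connected, simple, undirected, unweighted graph and $S\subseteq V$ with $|S|\ge2$. For $u\in V$ let $\deg_S(u)$ be the number of neighbors of $u$ in $S$, and define the $V\times V$ matrix $R$ by $R[u,v]=1$ if $u=v$ and $\deg_S(u)=0$; $R[u,v]=1/\deg_S(u)$ if $\{u,v\}\in E$ and $v\in S$; and $R[u,v]=0$ otherwise. Let $\mathbf{Q}$ be the transition matrix of $\textsc{ShortCut}(G,S)$ and $\mathbf{S}$ that of $\textsc{Schur}(G,S)$. Then for all $u\in S$, $(\mathbf{Q}R)[u,u]<1$, and for all $u\neq v$ in $S$, $$\mathbf{S}[u,v]=\frac{(\mathbf{Q}R)[u,v]}{1-(\mathbf{Q}R)[u,u]},$$ where $(\mathbf{Q}R)[u,u]$ equals the probability that a simple random walk on $G$ started at $u$ returns to $u$ before visiting any other vertex of $S$.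
   Context: The shortcut graph: for $u\in V$, let $x_0=u,x_1,\dots$ be a simple random walk on $G$ and $j=\min\{i>0:x_i\in S\}$; $\mathbf{Q}[u,v]=\Pr[x_{j-1}=v]$. The Schur complement transition matrix: for $u\ne v\in S$, $\mathbf{S}[u,v]$ is the probability that $v$ is the first vertex of $S\setminus\{u\}$ visited by a simple random walk on $G$ started at $u$, and $\mathbf{S}[u,u]=0$. *)

(* Defs.v *)
From HB Require Import structures.
From mathcomp Require Import all_boot all_order all_algebra.
From mathcomp Require Import all_classical all_reals all_analysis.
Set Implicit Arguments. Unset Strict Implicit. Unset Printing Implicit Defensive.
Import Order.TTheory GRing.Theory Num.Theory.
Local Open Scope ring_scope.

(* Infinite sums of nonnegative probability series are written as the limit
   of partial sums: limn (fun n => \sum_(k < n) F k). *)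

Section RandomWalk.
Variables (R : realType) (V : finType) (e : rel V).

Definition deg (u : V) : nat := #|[set v | e u v]|.

Definition step (u v : V) : R := if e u v then (deg u)%:R^-1 else 0.

(* probability that the simple random walk started at x follows exactly
   the steps listed in p (i.e. x_1, x_2, ... = p) *)
Fixpoint wprob (x : V) (p : seq V) : R :=
  if p is y :: p' then step x y * wprob y p' else 1.

(* Shortcut graph transition matrix:
   Q[u,v] = Pr[x_{j-1} = v], j = min{i > 0 : x_i \in S}.
   The event {j = k+1, x_{j-1} = v} is the disjoint union over the
   interior points x_1..x_k (all outside S) and the final x_{k+1} \in S. *)
Definition shortcutQ (S : {set V}) (u v : V) : R :=
  limn (fun n => \sum_(k < n) \sum_(p : k.-tuple V) \sum_(w in S)
     (if all (fun x => x \notin S) p && (last u p == v)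
      then wprob u (rcons p w) else 0)).

(* probability that the first vertex of A visited at a time i > 0 by the
   walk started at u is v *)
Definition first_hit (A : {set V}) (u v : V) : R :=
  limn (fun n => \sum_(k < n) \sum_(p : k.-tuple V)
     (if all (fun x => x \notin A) p then wprob u (rcons p v) else 0)).

Definition schurS (S : {set V}) (u v : V) : R :=
  if u == v then 0 else first_hit (S :\ u) u v.

Definition return_prob (S : {set V}) (u : V) : R := first_hit S u u.

Definition degS (S : {set V}) (u : V) : nat := #|[set v in S | e u v]|.

Definition Rmat (S : {set V}) (u v : V) : R :=
  if (u == v) && (degS S u == 0)%N then 1
  else if e u v && (v \in S) then (degS S u)%:R^-1 else 0.

Definition QR (S : {set V}) (u v : V) : R :=
  \sum_(w : V) shortcutQ S u w * Rmat S w v.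

End RandomWalk.

Definition simple_connected_graph (V : finType) (e : rel V) : Prop :=
  symmetric e /\ irreflexive e /\ (forall x y : V, connect e x y).

(* Main.v *)
Require Import Defs.
From HB Require Import structures.
From mathcomp Require Import all_boot all_order all_algebra.
From mathcomp Require Import all_classical all_reals all_analysis.
From mathcomp Require Import zify ring lra.
Import numFieldNormedType.Exports.
Import Order.TTheory GRing.Theory Num.Theory.
Local Open Scope ring_scope.
Set Implicit Arguments. Unset Strict Implicit. Unset Printing Implicit Defensive.

Section Aux.
Variables (R : realType) (V : finType) (e : rel V).

Lemma sum_tuple0 (F : 0.-tuple V -> R) : \sum_(p : 0.-tuple V) F p = F [tuple].
Proof. by rewrite (big_pred1 [tuple]) // => p; by apply/eqP; rewrite (tuple0 p). Qed.

Lemma sum_tupleS k (F : k.+1.-tuple V -> R) :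
  \sum_(p : k.+1.-tuple V) F p = \sum_(x : V) \sum_(p : k.-tuple V) F [tuple of x :: p].
Proof.
rewrite pair_big /=.
rewrite (reindex (fun xp : V * k.-tuple V => [tuple of xp.1 :: xp.2])) //=.
exists (fun t : k.+1.-tuple V => (thead t, [tuple of behead t])).
  by move=> [x p] _ /=; rewrite theadE; congr pair; apply: val_inj.
by move=> t _; rewrite /= -tuple_eta.
Qed.

Fixpoint h (A : {set V}) (k : nat) (x v : V) : R :=
  if k is k'.+1 then \sum_(y | y \notin A) step R e x y * h A k' y v
  else step R e x v.

Fixpoint q (A : {set V}) (k : nat) (x v : V) : R :=
  if k is k'.+1 then \sum_(y | y \notin A) step R e x y * q A k' y v
  else (x == v)%:R * \sum_(w in A) step R e x w.

Fixpoint sv (A : {set V}) (k : nat) (x : V) : R :=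
  if k is k'.+1 then \sum_(y | y \notin A) step R e x y * sv A k' y
  else 1.

Lemma hE (A : {set V}) k x v :
  \sum_(p : k.-tuple V) (if all (fun y => y \notin A) p then wprob R e x (rcons p v) else 0)
  = h A k x v.
Proof.
elim: k x => [|k IH] x; first by rewrite sum_tuple0 /= mulr1.
rewrite sum_tupleS /= [RHS]big_mkcond /=; apply: eq_bigr => y _.
case: ifP => yA /=.
  by rewrite -IH mulr_sumr; apply: eq_bigr => p _; case: ifP; rewrite ?mulr0.
by rewrite big1.
Qed.

Lemma qE (A : {set V}) k x v :
  \sum_(p : k.-tuple V) \sum_(w in A) (if all (fun y => y \notin A) p && (last x p == v)
     then wprob R e x (rcons p w) else 0)
  = q A k x v.
Proof.
elim: k x => [|k IH] x.
  rewrite sum_tuple0 /= eq_sym; case: eqP => _; rewrite ?mul1r ?mul0r.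
    by apply: eq_bigr => w _; rewrite mulr1.
  by rewrite big1.
rewrite sum_tupleS /= [RHS]big_mkcond /=; apply: eq_bigr => y _.
case: ifP => yA /=.
  by rewrite -IH mulr_sumr; apply: eq_bigr => p _; rewrite mulr_sumr;
     apply: eq_bigr => w _; case: ifP; rewrite ?mulr0.
by rewrite big1 // => p _; rewrite big1.
Qed.


Notation st := (step R e).

Lemma step_ge0 x y : 0 <= st x y.
Proof. by rewrite /step; case: ifP; rewrite ?invr_ge0 ?ler0n. Qed.

Lemma h_ge0 A k x v : 0 <= h A k x v.
Proof.
elim: k x => [|k IH] x /=; first exact: step_ge0.
by apply: sumr_ge0 => y _; apply: mulr_ge0; [apply: step_ge0|apply: IH].
Qed.

Lemma q_ge0 A k x v : 0 <= q A k x v.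
Proof.
elim: k x => [|k IH] x /=.
  by apply: mulr_ge0; [rewrite ler0n | apply: sumr_ge0 => y _; apply: step_ge0].
by apply: sumr_ge0 => y _; apply: mulr_ge0; [apply: step_ge0|apply: IH].
Qed.

Lemma sv_ge0 A k x : 0 <= sv A k x.
Proof.
elim: k x => [|k IH] x /=; first exact: ler01.
by apply: sumr_ge0 => y _; apply: mulr_ge0; [apply: step_ge0|apply: IH].
Qed.

Lemma sum_step x : \sum_y st x y <= 1.
Proof.
rewrite /step -big_mkcond /= sumr_const.
have -> : #|[pred y | e x y]| = deg e x by apply: eq_card => y; rewrite !inE.
case: (deg e x) => [|d]; first by rewrite mulr0n ler01.
have H : ((d.+1)%:R : R)^-1 *+ d.+1 = 1.
  by rewrite -(mulr_natr ((d.+1)%:R^-1)) mulVf // pnatr_eq0.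
by rewrite H.
Qed.


Lemma bound (A : {set V}) n x : \sum_(k < n) \sum_(w in A) h A k x w + sv A n x <= 1.
Proof.
elim: n x => [|n IH] x; first by rewrite big_ord0 add0r.
rewrite big_ord_recl /=.
have E : \sum_(i < n) \sum_(w in A) h A (lift ord0 i) x w =
   \sum_(y | y \notin A) st x y * \sum_(i < n) \sum_(w in A) h A i y w.
  under eq_bigr => i _ do rewrite lift0 /= exchange_big /=.
  rewrite exchange_big /=; apply: eq_bigr => y _.
  rewrite mulr_sumr; apply: eq_bigr => i _; by rewrite mulr_sumr.
rewrite E -addrA -big_split /=.
apply: le_trans (sum_step x).
rewrite [X in _ <= X](bigID (fun y => y \in A)) /=.
apply: lerD; first by [].
apply: ler_sum => y _; rewrite -mulrDr.
by apply: ler_piMr; [apply: step_ge0 | apply: IH].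
Qed.

Lemma qsum (A : {set V}) k x : \sum_v q A k x v = \sum_(w in A) h A k x w.
Proof.
elim: k x => [|k IH] x /=.
  rewrite (bigD1 x) //= eqxx mul1r [X in _ + X]big1 ?addr0 // => v /negbTE.
  by rewrite eq_sym => ->; rewrite mul0r.
rewrite exchange_big /=.
transitivity (\sum_(y | y \notin A) st x y * \sum_(w in A) h A k y w).
  by apply: eq_bigr => y _; rewrite -IH mulr_sumr.
rewrite exchange_big /=; apply: eq_bigr => y _; by rewrite mulr_sumr.
Qed.

Lemma qh (A : {set V}) k x v : v \in A ->
  \sum_w q A k x w * Rmat R e A w v = h A k x v.
Proof.
move=> vA; elim: k x => [|k IH] x /=.
  rewrite (bigD1 x) //= eqxx mul1r [X in _ + X]big1 ?addr0; last first.
    by move=> w /negbTE; rewrite eq_sym => ->; rewrite !mul0r.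
  have -> : \sum_(w in A) st x w = (degS e A x)%:R * (deg e x)%:R^-1.
    rewrite /step -big_mkcondr /= sumr_const -(mulr_natr ((deg e x)%:R^-1)) mulrC.
    by congr (_%:R * _); apply: eq_card => w; rewrite !inE.
  rewrite /Rmat /step.
  case: (eqVneq (degS e A x) 0%N) => [d0|dn0].
    have exv : e x v = false.
      apply/negP => exv.
      have : v \in [set w in A | e x w] by rewrite inE vA exv.
      by rewrite (cards0_eq d0) inE.
    by rewrite d0 mulr0n !mul0r exv.
  have -> : (x == v) && false = false by case: (x == v).
  rewrite vA andbT; case: ifP => _; last by rewrite mulr0.
  by rewrite mulrAC mulfV ?mul1r // pnatr_eq0.
transitivity (\sum_(y | y \notin A) st x y * \sum_w q A k y w * Rmat R e A w v).
  under eq_bigr => w _ do rewrite mulr_suml.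
  rewrite exchange_big /=; apply: eq_bigr => y _.
  rewrite mulr_sumr; apply: eq_bigr => w _; by rewrite mulrA.
by apply: eq_bigr => y _; rewrite IH.
Qed.


Lemma renew (S : {set V}) u v : u \in S -> forall k x,
  h (S :\ u) k x v = h S k x v + \sum_(i < k) h S i x u * h (S :\ u) (k.-1 - i) u v.
Proof.
move=> uS; elim=> [|k IH] x; first by rewrite big_ord0 addr0.
rewrite /= (bigD1 u) /=; last by rewrite !inE eqxx.
rewrite (eq_bigl (fun y => y \notin S)); last first.
  by move=> y; rewrite !inE; case: eqP => [->|_]; rewrite ?uS ?andbT.
under eq_bigr => y _ do rewrite IH mulrDr.
rewrite big_split /= big_ord_recl /= subn0.
rewrite [LHS]addrCA; congr (_ + _); congr (_ + _).
under eq_bigr => y _ do rewrite mulr_sumr.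
rewrite exchange_big /=; apply: eq_bigr => i _.
rewrite add0n mulr_suml.
have -> : (k - bump 0 i = k.-1 - i)%N by rewrite /bump /=; lia.
by apply: eq_bigr => y _; rewrite mulrA.
Qed.


Lemma conv (f : nat -> nat -> R) n :
  \sum_(k < n) \sum_(i < k) f i (k.-1 - i)%N =
  \sum_(i < n) \sum_(j < n.-1 - i) f i j.
Proof.
elim: n => [|n IH]; first by rewrite !big_ord0.
rewrite big_ord_recr /= IH [RHS]big_ord_recr /=.
rewrite [X in _ = _ + X]big1 ?addr0; last first.
  by move=> j _; have := ltn_ord j; lia.
rewrite -big_split /=; apply: eq_bigr => i _.
have -> : (n - i = (n.-1 - i).+1)%N by have := ltn_ord i; lia.
by rewrite big_ord_recr.
Qed.

Definition ps (f : nat -> R) n := \sum_(k < n) f k.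

Lemma ps_nd f : (forall k, 0 <= f k) -> nondecreasing_seq (ps f).
Proof.
move=> f0 n m nm; rewrite /ps (big_ord_widen m f nm).
rewrite [leRHS](bigID (fun i : 'I_m => (i < n)%N)) /= lerDl.
by apply: sumr_ge0.
Qed.

Lemma ps_cvg f M : (forall k, 0 <= f k) -> (forall n, ps f n <= M) -> cvgn (ps f).
Proof.
move=> f0 fM; apply: nondecreasing_is_cvgn; first exact: ps_nd.
by exists M => _ [n _ <-]; apply: fM.
Qed.

Lemma ps_le f n : (forall k, 0 <= f k) -> cvgn (ps f) -> ps f n <= limn (ps f).
Proof. by move=> f0 c; apply: nondecreasing_cvgn_le => //; apply: ps_nd. Qed.

Lemma ps_ge0 f n : (forall k, 0 <= f k) -> 0 <= ps f n.
Proof. by move=> f0; apply: sumr_ge0. Qed.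

Lemma hsum_bound (A : {set V}) x n : \sum_(k < n) \sum_(w in A) h A k x w <= 1.
Proof.
apply: le_trans (bound A n x); rewrite lerDl; exact: sv_ge0.
Qed.

Lemma hbound (A : {set V}) x w n : w \in A -> ps (fun k => h A k x w) n <= 1.
Proof.
move=> wA; apply: le_trans (hsum_bound A x n); apply: ler_sum => k _.
rewrite (bigD1 w) //= lerDl; apply: sumr_ge0 => y _; exact: h_ge0.
Qed.

Lemma hbound2 (A : {set V}) x u v n : u \in A -> v \in A -> u != v ->
  ps (fun k => h A k x u) n + ps (fun k => h A k x v) n <= 1.
Proof.
move=> uA vA uv; apply: le_trans (hsum_bound A x n).
rewrite /ps -big_split /=; apply: ler_sum => k _.
rewrite (bigD1 u) //= lerD2l (bigD1 v) /=; last by rewrite vA eq_sym.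
rewrite lerDl; apply: sumr_ge0 => y _; exact: h_ge0.
Qed.

Lemma qbound (A : {set V}) x w n : ps (fun k => q A k x w) n <= 1.
Proof.
apply: le_trans (hsum_bound A x n); apply: ler_sum => k _.
rewrite -qsum (bigD1 w) //= lerDl; apply: sumr_ge0 => y _; exact: q_ge0.
Qed.


Lemma step_gt0 x y : e x y -> 0 < st x y.
Proof.
move=> exy; rewrite /step exy invr_gt0 ltr0n.
by apply/card_gt0P; exists y; rewrite inE.
Qed.

Definition Pp (S : {set V}) u x := exists2 v, v \in S :\ u & exists k, 0 < h S k x v.

Lemma path_pos (S : {set V}) u t p x : u \in S -> path e x p -> last x p = t ->
  t \in S :\ u -> Pp S u x \/ x \in S :\ u \/ Pp S u u.
Proof.
move=> uS; elim: p x => [|y p IH] x /=; first by move=> _ -> ->; right; left.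
move=> /andP[exy py] lt tS.
have base : y \in S :\ u -> Pp S u x.
  by move=> yS; exists y => //; exists 0%N; exact: step_gt0.
case: (IH y py lt tS) => [[v vS [k hk]]|[yS|Pu]]; last 2 first.
- by left; apply: base.
- by right; right.
case: (boolP (y \in S)) => yS.
  case: (eqVneq y u) => [yu|ynu].
    by right; right; subst y; exists v => //; exists k.
  by left; apply: base; rewrite !inE ynu.
left; exists v => //; exists k.+1 => /=.
rewrite (bigD1 y) //=; apply: (lt_le_trans (_ : 0 < st x y * h S k y v)).
  by apply: mulr_gt0 => //; apply: step_gt0.
rewrite lerDl; apply: sumr_ge0 => z _; apply: mulr_ge0; [exact: step_ge0|exact: h_ge0].
Qed.

Lemma exists_pos (S : {set V}) u : (forall x y, connect e x y) -> (2 <= #|S|)%N ->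
  u \in S -> Pp S u u.
Proof.
move=> hc hS uS.
have : (0 < #|S :\ u|)%N by move: hS; rewrite (cardsD1 u S) uS; lia.
move=> /card_gt0P[t tS].
have /connectP[p pp lt] := hc u t.
case: (path_pos uS pp (esym lt) tS) => [//|[|//]].
by rewrite !inE eqxx.
Qed.

Lemma limsum (r : seq V) (f : V -> nat -> R) : (forall w, cvgn (f w)) ->
  ((fun n => \sum_(w <- r) f w n) @ \oo --> \sum_(w <- r) limn (f w))%classic.
Proof.
move=> fc; elim: r => [|a r IH].
  have -> : (fun n => \sum_(w <- [::]) f w n) = fun _ => 0.
    by apply/funext => n; rewrite big_nil.
  by rewrite big_nil; apply: cvg_cst.
have -> : (fun n => \sum_(w <- a :: r) f w n) =
   (fun n => f a n + \sum_(w <- r) f w n).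
  by apply/funext => n; rewrite big_cons.
rewrite big_cons; apply: cvgD => //; exact: fc.
Qed.


Lemma hcvg (A : {set V}) x w : w \in A -> cvgn (ps (fun k => h A k x w)).
Proof. by move=> wA; apply: (@ps_cvg _ 1) => [k|n]; [exact: h_ge0|exact: hbound]. Qed.

Lemma qcvg (A : {set V}) x w : cvgn (ps (fun k => q A k x w)).
Proof. by apply: (@ps_cvg _ 1) => [k|n]; [exact: q_ge0|exact: qbound]. Qed.

Lemma fh_eq (A : {set V}) x v : first_hit R e A x v = limn (ps (fun k => h A k x v)).
Proof.
rewrite /first_hit.
have -> : (fun n => \sum_(k < n) \sum_(p : k.-tuple V)
     (if all (fun x => x \notin A) p then wprob R e x (rcons p v) else 0))
   = ps (fun k => h A k x v).
  by apply/funext => n; apply: eq_bigr => k _; rewrite hE.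
by [].
Qed.

Lemma QR_eq (S : {set V}) u v : v \in S -> QR R e S u v = limn (ps (fun k => h S k u v)).
Proof.
move=> vS; rewrite /QR.
have E w : shortcutQ R e S u w = limn (ps (fun k => q S k u w)).
  rewrite /shortcutQ.
  have -> : (fun n => \sum_(k < n) \sum_(p : k.-tuple V) \sum_(w0 in S)
     (if all (fun x => x \notin S) p && (last u p == w)
      then wprob R e u (rcons p w0) else 0)) = ps (fun k => q S k u w).
    by apply/funext => n; apply: eq_bigr => k _; rewrite qE.
  by [].
under eq_bigr => w _ do rewrite E.
have C w : ((fun n => ps (fun k => q S k u w) n * Rmat R e S w v) @ \oo -->
    limn (ps (fun k => q S k u w)) * Rmat R e S w v)%classic.
  by apply: cvgM; [exact: qcvg | exact: cvg_cst].
have L := @limsum (index_enum V) (fun w n => ps (fun k => q S k u w) n * Rmat R e S w v)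
   (fun w => cvgP _ (C w)).
have L2 : ((fun n => \sum_w ps (fun k => q S k u w) n * Rmat R e S w v) @ \oo -->
    \sum_w limn (ps (fun k => q S k u w)) * Rmat R e S w v)%classic.
  move: L; congr (_ --> _)%classic; apply: eq_bigr => w _.
  by apply: cvg_lim => //; exact: C.
rewrite -(cvg_lim _ L2) //.
have -> : (fun n => \sum_w ps (fun k => q S k u w) n * Rmat R e S w v) =
   ps (fun k => h S k u v).
  apply/funext => n.
  rewrite /ps; under eq_bigr => w _ do rewrite mulr_suml.
  by rewrite exchange_big /=; apply: eq_bigr => k _; rewrite qh.
by [].
Qed.


Lemma lim_ge0 f : (forall k, 0 <= f k) -> cvgn (ps f) -> 0 <= limn (ps f).
Proof. by move=> f0 c; apply: le_trans (ps_le 0 f0 c); exact: ps_ge0. Qed.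

Lemma renew_lim (S : {set V}) u v : u \in S -> v \in S -> u != v ->
  limn (ps (fun k => h (S :\ u) k u v)) = limn (ps (fun k => h S k u v)) +
    limn (ps (fun k => h S k u u)) * limn (ps (fun k => h (S :\ u) k u v)).
Proof.
move=> uS vS uv.
set a := fun k => h (S :\ u) k u v; set b := fun k => h S k u v.
set c := fun k => h S k u u.
have va : v \in S :\ u by rewrite !inE eq_sym uv vS.
have ca : cvgn (ps a) := @hcvg (S :\ u) u v va.
have cb : cvgn (ps b) := @hcvg S u v vS.
have cc : cvgn (ps c) := @hcvg S u u uS.
have a0 k : 0 <= a k by exact: h_ge0.
have b0 k : 0 <= b k by exact: h_ge0.
have c0 k : 0 <= c k by exact: h_ge0.
have Eps n : ps a n = ps b n + \sum_(i < n) c i * ps a (n.-1 - i)%N.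
  rewrite /ps /a /b /c; under eq_bigr => k _ do rewrite (renew v uS).
  rewrite big_split /= (conv (fun i j => h S i u u * h (S :\ u) j u v)).
  congr (_ + _); apply: eq_bigr => i _.
  by rewrite mulr_sumr.
apply/eqP; rewrite eq_le; apply/andP; split.
  apply: limr_le => //; apply: nearW => n; rewrite Eps.
  apply: lerD; first exact: ps_le.
  apply: (@le_trans _ _ (\sum_(i < n) c i * limn (ps a))).
    by apply: ler_sum => i _; apply: ler_wpM2l => //; exact: ps_le.
  rewrite -mulr_suml; apply: ler_wpM2r; first exact: lim_ge0.
  exact: ps_le.
apply: (cvgr_to_le (F := \oo%classic) (f := fun n => ps b n + ps c n * ps a n)).
  by apply: (cvgD (F := \oo%classic)) => //; apply: (cvgM (F := \oo%classic)).
apply: nearW => n; apply: le_trans (ps_le (n + n) a0 ca); rewrite [ps a (n + n)]Eps.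
apply: lerD; first by apply: ps_nd => //; exact: leq_addr.
pose g i := c i * ps a ((n + n).-1 - i)%N.
have g0 i : 0 <= g i by apply: mulr_ge0 => //; exact: ps_ge0.
apply: (@le_trans _ _ (ps g n)); last by apply: ps_nd => //; exact: leq_addr.
rewrite /ps mulr_suml; apply: ler_sum => i _; rewrite /g.
apply: ler_wpM2l => //; apply: ps_nd => //; have := ltn_ord i; lia.
Qed.


Lemma main_aux (S : {set V}) (hc : forall x y, connect e x y) (hS : (2 <= #|S|)%N) :
  (forall u, u \in S -> QR R e S u u < 1 /\ QR R e S u u = return_prob R e S u) /\
  (forall u v, u \in S -> v \in S -> u != v ->
     schurS R e S u v = QR R e S u v / (1 - QR R e S u u)).
Proof.
have key u : u \in S -> QR R e S u u < 1.
  move=> uS; have [t tS [k hk]] := exists_pos hc hS uS.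
  move: (tS); rewrite !inE => /andP[tu tS'].
  rewrite QR_eq //.
  have cu := @hcvg S u u uS; have ct := @hcvg S u t tS'.
  have H2 : limn (ps (fun k => h S k u u)) + limn (ps (fun k => h S k u t)) <= 1.
    apply: (cvgr_to_le (F := \oo%classic)
      (f := fun n => ps (fun k => h S k u u) n + ps (fun k => h S k u t) n)).
      by apply: (cvgD (F := \oo%classic)) => //.
    by apply: nearW => n; apply: hbound2 => //; rewrite eq_sym.
  have Bt : 0 < limn (ps (fun k => h S k u t)).
    apply: (lt_le_trans hk); apply: le_trans (ps_le k.+1 (fun j => h_ge0 S j u t) ct).
    rewrite /ps big_ord_recr /= lerDr; apply: sumr_ge0 => j _; exact: h_ge0.
  by apply: lt_le_trans H2; rewrite ltrDl.
split.
  move=> u uS; split; first exact: key.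
  by rewrite QR_eq // /return_prob fh_eq.
move=> u v uS vS uv.
have C1 := key u uS.
rewrite /schurS (negbTE uv) fh_eq !QR_eq // in C1 *.
have E := renew_lim uS vS uv.
set A := limn (ps (fun k => h (S :\ u) k u v)) in E *.
set B := limn (ps (fun k => h S k u v)) in E *.
set C := limn (ps (fun k => h S k u u)) in E C1 *.
have nz : 1 - C != 0 by rewrite subr_eq0 gt_eqF.
have HA : A * (1 - C) = B.
  rewrite mulrBr mulr1 {1}E; ring.
by rewrite -HA mulfK.
Qed.

End Aux.

Theorem mainTheorem11 (R : realType) (V : finType) (e : rel V) (S : {set V})
  (hG : simple_connected_graph e) (hS : (2 <= #|S|)%N) :
  (forall u, u \in S ->
     QR R e S u u < 1 /\ QR R e S u u = return_prob R e S u) /\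
  (forall u v, u \in S -> v \in S -> u != v ->
     schurS R e S u v = QR R e S u v / (1 - QR R e S u u)).
Proof.
move: hG => [_ [_ hc]]; exact: main_aux.
Qed.
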